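(* Let $G$ be a connected $(2K_2, K_1+C_4)$-free graph. Then either $G$ is a pseudo-split graph, or there exists a partition $(V_1,\dots,V_6)$ of $V(G)$ (parts possibly empty) such that $V_i$ is an independent set for each $i\in\{2,\dots,6\}$, and moreover one of the following holds: (a) $G[V_1]$ is a pseudo-split graph with $\omega(G[V_1])\le \omega(G)-1$, and $V_5=V_6=\emptyset$; or (b) $G[V_1]$ is isomorphic to the complement of a bipartite graph.
   Context: All graphs are finite, simple and undirected. $C_n$, $K_n$ denote the cycle and complete graph on $n$ vertices; $2K_2$ is the disjoint union of two copies of $K_2$; $G_1+G_2$ denotes the join (disjoint union plus all edges between them), so $K_1+C_4$ is the wheel with a center adjacent to all vertices of a $4$-cycle. A graph is $\mathcal F$-free if it has no induced subgraph isomorphic to a member of $\mathcal F$. A pseudo-split graph is a $(2K_2, C_4)$-free graph. $G[S]$ is the subgraph induced by $S$; $\omega$ denotes clique number. *)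

(* Defs.v *)
From mathcomp Require Import all_boot.
Set Implicit Arguments. Unset Strict Implicit. Unset Printing Implicit Defensive.

Definition simple_graph (T : finType) (e : rel T) : Prop :=
  symmetric e /\ irreflexive e.

Definition connected_graph (T : finType) (e : rel T) : Prop :=
  forall x y : T, connect e x y.

Definition induced_in (U : finType) (h : rel U) (T : finType) (e : rel T)
  (S : {set T}) : Prop :=
  exists f : U -> T, [/\ injective f, forall u, f u \in S &
                        forall u v, h u v = e (f u) (f v)].

Definition two_K2 : rel 'I_4 := fun i j =>
  [|| (val i == 0) && (val j == 1), (val i == 1) && (val j == 0),
      (val i == 2) && (val j == 3) | (val i == 3) && (val j == 2)].

Definition C4 : rel 'I_4 := fun i j =>
  ((val i + 1) %% 4 == val j) || ((val j + 1) %% 4 == val i).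

(* K1 + C4: vertex 0 is the center, vertices 1..4 form the 4-cycle 1-2-3-4-1. *)
Definition K1_C4 : rel 'I_5 := fun i j =>
  [|| (val i == 0) && (val j != 0), (val j == 0) && (val i != 0) |
      [&& val i != 0, val j != 0 &
          ((((val i).-1 + 1) %% 4 == (val j).-1) ||
           (((val j).-1 + 1) %% 4 == (val i).-1))]].

Definition pseudo_split_in (T : finType) (e : rel T) (S : {set T}) : Prop :=
  ~ induced_in two_K2 e S /\ ~ induced_in C4 e S.

Definition clique (T : finType) (e : rel T) (A : {set T}) : bool :=
  [forall x in A, forall y in A, (x != y) ==> e x y].

Definition independent (T : finType) (e : rel T) (A : {set T}) : bool :=
  [forall x in A, forall y in A, ~~ e x y].

Definition omega_in (T : finType) (e : rel T) (S : {set T}) : nat :=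
  \max_(A : {set T} | (A \subset S) && clique e A) #|A|.

(* G[S] is the complement of a bipartite graph: the complement of G[S]
   admits a proper 2-colouring. *)
Definition co_bipartite_in (T : finType) (e : rel T) (S : {set T}) : Prop :=
  exists c : T -> bool, forall x y, x \in S -> y \in S -> x != y ->
    ~~ e x y -> c x != c y.

(* Main.v *)
Require Import Defs.
From mathcomp Require Import all_boot.
From Stdlib Require Import Classical.
Set Implicit Arguments. Unset Strict Implicit. Unset Printing Implicit Defensive.
Section S.
Variables (T : finType) (e : rel T).
Hypothesis Hs : simple_graph e.
Definition mk4 (p q r s : T) (i : 'I_4) : T :=
  match val i with 0 => p | 1 => q | 2 => r | _ => s end.
Lemma no2K2 : ~ induced_in two_K2 e [set: T] -> forall p q r s,
  e p q -> e r s -> ~~ e p r -> ~~ e p s -> ~~ e q r -> ~~ e q s -> False.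
Proof.
case: Hs => Hsym Hirr H p q r s Epq Ers Npr Nps Nqr Nqs.
have Eqp : e q p by rewrite Hsym.
have Esr : e s r by rewrite Hsym.
have Nrp : e r p = false by rewrite Hsym; apply/negbTE.
have Nsp : e s p = false by rewrite Hsym; apply/negbTE.
have Nrq : e r q = false by rewrite Hsym; apply/negbTE.
have Nsq : e s q = false by rewrite Hsym; apply/negbTE.
move/negbTE: Npr => Npr; move/negbTE: Nps => Nps; move/negbTE: Nqr => Nqr; move/negbTE: Nqs => Nqs.
have D1 : p != q by apply/eqP=> E; move: Epq; rewrite E Hirr.
have D6 : r != s by apply/eqP=> E; move: Ers; rewrite E Hirr.
have D2 : p != r by apply/eqP=> E; move: Nqr; rewrite -E Eqp.
have D3 : p != s by apply/eqP=> E; move: Nqs; rewrite -E Eqp.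
have D4 : q != r by apply/eqP=> E; move: Npr; rewrite -E Epq.
have D5 : q != s by apply/eqP=> E; move: Nps; rewrite -E Epq.
have D : [&& p != q, p != r, p != s, q != r, q != s & r != s].
  by rewrite D1 D2 D3 D4 D5 D6.
apply: H; exists (mk4 p q r s); split.
- move=> [m Hm] [n Hn]; rewrite /mk4 /=.
  move: Hm Hn; case: m => [|[|[|[|m]]]] //; case: n => [|[|[|[|n]]]] // Hm Hn E;
  try (by apply: val_inj);
  by move: D; rewrite E !eqxx /= ?andbF.
- by move=> u; rewrite in_setT.
- move=> [m Hm] [n Hn]; rewrite /mk4 /=.
  move: Hm Hn; case: m => [|[|[|[|m]]]] //; case: n => [|[|[|[|n]]]] // Hm Hn;
  by rewrite /two_K2 /= ?Hirr ?Epq ?Ers ?Eqp ?Esr ?Npr ?Nps ?Nqr ?Nqs ?Nrp ?Nsp ?Nrq ?Nsq.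
Qed.

Definition mk5 (z p1 p2 p3 p4 : T) (i : 'I_5) : T :=
  match val i with 0 => z | 1 => p1 | 2 => p2 | 3 => p3 | _ => p4 end.
Lemma noW : ~ induced_in K1_C4 e [set: T] -> forall z p1 p2 p3 p4,
  e z p1 -> e z p2 -> e z p3 -> e z p4 ->
  e p1 p2 -> e p2 p3 -> e p3 p4 -> e p4 p1 -> ~~ e p1 p3 -> ~~ e p2 p4 ->
  p1 != p3 -> p2 != p4 -> False.
Proof.
case: Hs => Hsym Hirr H z p1 p2 p3 p4 E1 E2 E3 E4 F1 F2 F3 F4 N1 N2 D13 D24.
have E1' : e p1 z by rewrite Hsym.
have E2' : e p2 z by rewrite Hsym.
have E3' : e p3 z by rewrite Hsym.
have E4' : e p4 z by rewrite Hsym.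
have F1' : e p2 p1 by rewrite Hsym.
have F2' : e p3 p2 by rewrite Hsym.
have F3' : e p4 p3 by rewrite Hsym.
have F4' : e p1 p4 by rewrite Hsym.
have N1' : e p3 p1 = false by rewrite Hsym; apply/negbTE.
have N2' : e p4 p2 = false by rewrite Hsym; apply/negbTE.
move/negbTE: N1 => N1; move/negbTE: N2 => N2.
have neq : forall u v, e u v -> u != v.
  by move=> u v Euv; apply/eqP=> E; move: Euv; rewrite E Hirr.
have D1 := neq _ _ E1. have D2 := neq _ _ E2. have D3 := neq _ _ E3. have D4 := neq _ _ E4.
have D5 := neq _ _ F1. have D6 := neq _ _ F2. have D7 := neq _ _ F3. have D8 := neq _ _ F4.
apply: H; exists (mk5 z p1 p2 p3 p4); split.
- move=> [m Hm] [n Hn]; rewrite /mk5 /=.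
  move: Hm Hn; case: m => [|[|[|[|[|m]]]]] //; case: n => [|[|[|[|[|n]]]]] // Hm Hn E;
  try (by apply: val_inj);
  by first [move: D1; rewrite E eqxx | move: D2; rewrite E eqxx | move: D3; rewrite E eqxx | move: D4; rewrite E eqxx | move: D5; rewrite E eqxx | move: D6; rewrite E eqxx | move: D7; rewrite E eqxx | move: D8; rewrite E eqxx | move: D13; rewrite E eqxx | move: D24; rewrite E eqxx].
- by move=> u; rewrite in_setT.
- move=> [m Hm] [n Hn]; rewrite /mk5 /=.
  move: Hm Hn; case: m => [|[|[|[|[|m]]]]] //; case: n => [|[|[|[|[|n]]]]] // Hm Hn;
  by rewrite /K1_C4 /= ?Hirr ?E1 ?E2 ?E3 ?E4 ?E1' ?E2' ?E3' ?E4' ?F1 ?F2 ?F3 ?F4 ?F1' ?F2' ?F3' ?F4' ?N1 ?N2 ?N1' ?N2'.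
Qed.

Definition o4 (k : nat) (H : k < 4) : 'I_4 := Ordinal H.

Lemma part_lemma (b d x : T) :
  ~ induced_in two_K2 e [set: T] -> ~ induced_in K1_C4 e [set: T] ->
  e x b -> e x d -> ~~ e b d -> b != d ->
  (forall y z, e b y -> e d y -> e b z -> e d z -> e y z ->
     exists2 w, e b w && e d w & e x w) ->
  exists V1 V2 V3 V4 V5 V6 : {set T},
    [/\ V1 :|: V2 :|: V3 :|: V4 :|: V5 :|: V6 = [set: T],
        [&& [disjoint V1 & V2], [disjoint V1 & V3], [disjoint V1 & V4],
            [disjoint V1 & V5], [disjoint V1 & V6],
            [disjoint V2 & V3], [disjoint V2 & V4], [disjoint V2 & V5],
            [disjoint V2 & V6], [disjoint V3 & V4],
            [disjoint V3 & V5], [disjoint V3 & V6], [disjoint V4 & V5],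
            [disjoint V4 & V6] & [disjoint V5 & V6]],
        [&& independent e V2, independent e V3, independent e V4,
            independent e V5 & independent e V6] &
        ((pseudo_split_in e V1 /\ omega_in e V1 <= (omega_in e [set: T]).-1
          /\ V5 = set0 /\ V6 = set0)
         \/ co_bipartite_in e V1)].
Proof.
move=> H2 HW Exb Exd Nbd Dbd Hch.
have [Hsym Hirr] := Hs.
have K2 := no2K2 H2. have W := noW HW.
have sy : forall u v, e u v -> e v u by move=> u v; rewrite Hsym.
have nsy : forall u v, ~~ e u v -> ~~ e v u by move=> u v; rewrite Hsym.
exists [set y | e x y], [set y | ~~ e x y && ((y == x) || ~~ e b y)],
  [set y | [&& ~~ e x y, y != x, e b y & ~~ e d y]],
  [set y | [&& ~~ e x y, y != x, e b y & e d y]], set0, set0.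
split.
- apply/setP => y; rewrite !inE.
  by case: (e x y); case: (y == x); case: (e b y); case: (e d y).
- repeat (apply/andP; split);
  rewrite -setI_eq0; apply/eqP/setP=> y; rewrite !inE;
  by case: (e x y); case: (y == x); case: (e b y); case: (e d y).
- repeat (apply/andP; split); apply/forallP => y; apply/implyP => Hy;
    apply/forallP => z; apply/implyP => Hz; rewrite ?inE in Hy Hz => //;
    apply/negP => Eyz.
  + case/andP: Hy => Nxy /orP [/eqP Eyx|Nby].
      by move: Hz; rewrite -Eyx Eyz.
    case/andP: Hz => Nxz /orP [/eqP Ezx|Nbz].
      by move: Nxy; rewrite -Ezx (sy _ _ Eyz).
    exact: (K2 _ _ _ _ Exb Eyz Nxy Nxz Nby Nbz).
  + case/and4P: Hy => Nxy _ _ Ndy; case/and4P: Hz => Nxz _ _ Ndz.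
    exact: (K2 _ _ _ _ Exd Eyz Nxy Nxz Ndy Ndz).
  + case/and4P: Hy => Nxy Dyx Eby Edy; case/and4P: Hz => Nxz Dzx Ebz Edz.
    have [w /andP [Ebw Edw] Exw] := Hch y z Eby Edy Ebz Edz Eyz.
    case Ewy : (e w y).
      apply: (W _ _ _ _ _ (sy _ _ Ebw) (sy _ _ Exw) (sy _ _ Edw) Ewy (sy _ _ Exb) Exd
                Edy (sy _ _ Eby) Nbd Nxy Dbd); by rewrite eq_sym.
    case Ewz : (e w z).
      apply: (W _ _ _ _ _ (sy _ _ Ebw) (sy _ _ Exw) (sy _ _ Edw) Ewz (sy _ _ Exb) Exd
                Edz (sy _ _ Ebz) Nbd Nxz Dbd); by rewrite eq_sym.
    by apply: (K2 _ _ _ _ Exw Eyz Nxy Nxz); rewrite ?Ewy ?Ewz.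
- left; split; [split|split; [|by []]].
  + move=> [f [fi _ fh]]; apply: H2; exists f; split => // u; exact: in_setT.
  + move=> [f [fi fV fh]].
    have V : forall u, e x (f u) by move=> u; move: (fV u); rewrite inE.
    have Ei : forall u v, C4 u v -> e (f u) (f v) by move=> u v; rewrite fh.
    have Ni : forall u v, ~~ C4 u v -> ~~ e (f u) (f v) by move=> u v; rewrite fh.
    apply: (W _ _ _ _ _ (V (o4 (isT : 0 < 4))) (V (o4 (isT : 1 < 4))) (V (o4 (isT : 2 < 4))) (V (o4 (isT : 3 < 4))));
      try (apply: Ei; by []); try (apply: Ni; by []);
      by apply/eqP => /fi /(congr1 val).
  + rewrite /omega_in; apply/bigmax_leqP => A /andP [sA cA].
    have xA : x \notin A.
      by apply/negP => /(subsetP sA); rewrite inE Hirr.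
    have cl : clique e (x |: A).
      apply/forallP => y; apply/implyP; rewrite in_setU1 => Hy;
      apply/forallP => z; apply/implyP; rewrite in_setU1 => Hz; apply/implyP => Dyz.
      case/orP: Hy => [/eqP Ey|yA]; case/orP: Hz => [/eqP Ez|zA].
      * by move: Dyz; rewrite Ey Ez eqxx.
      * by rewrite Ey; move/(subsetP sA): zA; rewrite inE.
      * by rewrite Ez; apply: sy; move/(subsetP sA): yA; rewrite inE.
      * by move/forallP/(_ y)/implyP/(_ yA)/forallP/(_ z)/implyP/(_ zA)/implyP/(_ Dyz): cA.
    have := @leq_bigmax_cond _ (fun B : {set T} => (B \subset [set: T]) && clique e B)
              (fun B => #|B|) (x |: A).
    rewrite subsetT cl cardsU1 xA /= => /(_ isT).
    by case: (\max_(_ | _) _).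
Qed.
End S.

Theorem theorem3p3 (T : finType) (e : rel T) :
  simple_graph e -> connected_graph e ->
  ~ induced_in two_K2 e [set: T] -> ~ induced_in K1_C4 e [set: T] ->
  pseudo_split_in e [set: T] \/
  exists V1 V2 V3 V4 V5 V6 : {set T},
    [/\ V1 :|: V2 :|: V3 :|: V4 :|: V5 :|: V6 = [set: T],
        [&& [disjoint V1 & V2], [disjoint V1 & V3], [disjoint V1 & V4],
            [disjoint V1 & V5], [disjoint V1 & V6],
            [disjoint V2 & V3], [disjoint V2 & V4], [disjoint V2 & V5],
            [disjoint V2 & V6], [disjoint V3 & V4],
            [disjoint V3 & V5], [disjoint V3 & V6], [disjoint V4 & V5],
            [disjoint V4 & V6] & [disjoint V5 & V6]],
        [&& independent e V2, independent e V3, independent e V4,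
            independent e V5 & independent e V6] &
        ((pseudo_split_in e V1 /\ omega_in e V1 <= (omega_in e [set: T]).-1
          /\ V5 = set0 /\ V6 = set0)
         \/ co_bipartite_in e V1)].
Proof.
move=> Hs _ H2 HW.
have [HC|HC] := classic (induced_in C4 e [set: T]); last by left; split.
right.
have [Hsym Hirr] := Hs.
case: HC => f [fi _ fh].
have Ei : forall u v, C4 u v -> e (f u) (f v) by move=> u v; rewrite fh.
have Ni : forall u v, ~~ C4 u v -> ~~ e (f u) (f v) by move=> u v; rewrite fh.
set a := f (o4 (isT : 0 < 4)).
set b := f (o4 (isT : 1 < 4)).
set d := f (o4 (isT : 3 < 4)).
have Eab : e a b by apply: Ei.
have Ead : e a d by apply: Ei.
have Nbd : ~~ e b d by apply: Ni.
have Dbd : b != d by apply/eqP => /fi /(congr1 val).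
have [Hex|Hnex] := boolP [exists w, [&& e b w, e d w & [exists z, [&& e b z, e d z & e w z]]]].
- case/existsP: Hex => w /and3P [Ebw Edw /existsP [z /and3P [Ebz Edz Ewz]]].
  apply: (part_lemma Hs H2 HW (b := b) (d := d) (x := w)) => //;
    try (by rewrite Hsym).
  by move=> y z' _ _ _ _ _; exists z; rewrite ?Ebz ?Edz.
- apply: (part_lemma Hs H2 HW (b := b) (d := d) (x := a)) => //.
  move=> y z Eby Edy Ebz Edz Eyz; exfalso; move/negP: Hnex; apply.
  apply/existsP; exists y; rewrite Eby Edy /=; apply/existsP; exists z.
  by rewrite Ebz Edz Eyz.
Qed.
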